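(* For every projection algebra $P$, every DRC-semigroup $S$, and every projection algebra morphism $\phi:P\to\mathbf P(S)$, there exists a unique DRC-morphism $\Phi:\mathbb F(P)\to S$ whose restriction to $P$ (identified with $\mathbf P(\mathbb F(P))$ via $p\leftrightarrow\overline{x_p}$) is $\phi$, i.e.\ $\overline{x_p}\,\Phi=p\phi$ for all $p\in P$.
   Context: Maps are written on the right and composed left to right. A projection algebra is a set $P$ with maps $\theta_p,\delta_p:P\to P$ ($p\in P$) such that for all $p,q$: $p\theta_p=p$, $p\delta_p=p$; $p\theta_{q\theta_p}=q\theta_p$, $p\delta_{q\delta_p}=q\delta_p$; $\theta_q\theta_{q\theta_p}=\theta_q\theta_p$, $\delta_q\delta_{q\delta_p}=\delta_q\delta_p$; $\theta_p\delta_p=\theta_p$, $\delta_p\theta_p=\delta_p$; $\theta_{p\delta_q}\theta_p=\theta_q\theta_p$, $\delta_{p\theta_q}\delta_p=\delta_q\delta_p$. A projection algebra morphism $\phi:P\to P'$ satisfies $(q\theta_p)\phi=(q\phi)\theta'_{p\phi}$, $(q\delta_p)\phi=(q\phi)\delta'_{p\phi}$. Write $p\,\mathscr F\,q$ iff $p=q\delta_p$ and $q=p\theta_q$. A DRC-semigroup is $(S,\cdot,D,R)$, $(S,\cdot)$ a semigroup, $D,R:S\to S$ with, for all $a,b$: $D(a)a=a$, $aR(a)=a$; $D(ab)=D(aD(b))$, $R(ab)=R(R(a)b)$; $D(ab)=D(a)D(ab)D(a)$, $R(ab)=R(b)R(ab)R(b)$; $R(D(a))=D(a)$, $D(R(a))=R(a)$.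 A DRC-morphism preserves $\cdot,D,R$. $\mathbf P(S)=\{D(a):a\in S\}$ is a projection algebra under $q\theta_p=R(qp)$, $q\delta_p=D(pq)$. $\mathbb F(P)$ is the semigroup presented by generators $x_p$ ($p\in P$) and relations $x_p^2=x_p$, $x_px_q=x_px_{p\theta_q}$, $x_px_q=x_{q\delta_p}x_q$; every element equals $\overline{x_{p_1}\cdots x_{p_k}}$ for some $p_1\mathscr F\cdots\mathscr F p_k$ with $p_1,p_k$ determined, and it is a DRC-semigroup with $D(\overline{x_{p_1}\cdots x_{p_k}})=\overline{x_{p_1}}$, $R(\overline{x_{p_1}\cdots x_{p_k}})=\overline{x_{p_k}}$, whose projections are exactly the $\overline{x_p}$, $p\in P$. *)

(* Defs.v *)
(* Maps are written on the right: we write [theta p q] for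
   q θ_p and [delta p q] for q δ_p. *)
From Stdlib Require Import List ClassicalEpsilon.
Import ListNotations.
Set Implicit Arguments.

Record ProjAlg := {
  pa_car :> Type;
  theta : pa_car -> pa_car -> pa_car;
  delta : pa_car -> pa_car -> pa_car;
  pa_theta_id : forall p, theta p p = p;
  pa_delta_id : forall p, delta p p = p;
  pa_theta2 : forall p q, theta (theta p q) p = theta p q;
  pa_delta2 : forall p q, delta (delta p q) p = delta p q;
  pa_theta3 : forall p q x, theta (theta p q) (theta q x) = theta p (theta q x);
  pa_delta3 : forall p q x, delta (delta p q) (delta q x) = delta p (delta q x);
  pa_theta_delta : forall p x, delta p (theta p x) = theta p x;
  pa_delta_theta : forall p x, theta p (delta p x) = delta p x;
  pa_theta5 : forall p q x, theta p (theta (delta q p) x) = theta p (theta q x);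
  pa_delta5 : forall p q x, delta p (delta (theta q p) x) = delta p (delta q x)
}.

(** Morphism condition between two sets with operations θ, δ
    (written generically so it applies to P(S) without repackaging). *)
Definition is_pa_morphism {A B : Type}
  (thA deA : A -> A -> A) (thB deB : B -> B -> B) (f : A -> B) : Prop :=
  (forall p q, f (thA p q) = thB (f p) (f q)) /\
  (forall p q, f (deA p q) = deB (f p) (f q)).

Record DRC := {
  drc_car :> Type;
  mul : drc_car -> drc_car -> drc_car;
  Dop : drc_car -> drc_car;
  Rop : drc_car -> drc_car;
  drc_assoc : forall a b c, mul a (mul b c) = mul (mul a b) c;
  drc_DL : forall a, mul (Dop a) a = a;
  drc_RR : forall a, mul a (Rop a) = a;
  drc_D_mul : forall a b, Dop (mul a b) = Dop (mul a (Dop b));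
  drc_R_mul : forall a b, Rop (mul a b) = Rop (mul (Rop a) b);
  drc_D_sand : forall a b, Dop (mul a b) = mul (mul (Dop a) (Dop (mul a b))) (Dop a);
  drc_R_sand : forall a b, Rop (mul a b) = mul (mul (Rop b) (Rop (mul a b))) (Rop b);
  drc_RD : forall a, Rop (Dop a) = Dop a;
  drc_DR : forall a, Dop (Rop a) = Rop a
}.

Definition is_drc_morphism {A B : Type}
  (mA : A -> A -> A) (DA RA : A -> A) (mB : B -> B -> B) (DB RB : B -> B)
  (f : A -> B) : Prop :=
  (forall a b, f (mA a b) = mB (f a) (f b)) /\
  (forall a, f (DA a) = DB (f a)) /\
  (forall a, f (RA a) = RB (f a)).

Section ProjS.
Variable S : DRC.
Definition projS : Type := { x : S | exists a, x = Dop S a }.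

Definition projS_theta (p q : projS) : projS :=
  exist _ (Rop S (mul S (proj1_sig q) (proj1_sig p)))
    (ex_intro _ (Rop S (mul S (proj1_sig q) (proj1_sig p)))
       (eq_sym (drc_DR S _))).

Definition projS_delta (p q : projS) : projS :=
  exist _ (Dop S (mul S (proj1_sig p) (proj1_sig q)))
    (ex_intro _ (mul S (proj1_sig p) (proj1_sig q)) eq_refl).
End ProjS.

Section FreeP.
Variable P : ProjAlg.

Inductive frel : list P -> list P -> Prop :=
| frel_idem : forall p, frel [p; p] [p]
| frel_theta : forall p q, frel [p; q] [p; theta P q p]
| frel_delta : forall p q, frel [p; q] [delta P p q; q].

Inductive fcong : list P -> list P -> Prop :=
| fcong_step : forall l u v r, frel u v -> fcong (l ++ u ++ r) (l ++ v ++ r)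
| fcong_refl : forall u, fcong u u
| fcong_sym : forall u v, fcong u v -> fcong v u
| fcong_trans : forall u v w, fcong u v -> fcong v w -> fcong u w.

Definition word : Type := (P * list P)%type.
Definition wlist (w : word) : list P := fst w :: snd w.

Definition FP : Type := { A : list P -> Prop | exists w : word, A = fcong (wlist w) }.

Definition cls (w : word) : FP := exist _ (fcong (wlist w)) (ex_intro _ w eq_refl).

Definition xgen (p : P) : FP := cls (p, []).

Definition rep (a : FP) : word :=
  proj1_sig (constructive_indefinite_description _ (proj2_sig a)).

Definition FP_mul (a b : FP) : FP :=
  cls (fst (rep a), snd (rep a) ++ wlist (rep b)).

Definition Frel (p q : P) : Prop := p = delta P p q /\ q = theta P q p.

Fixpoint Fchain_from (p : P) (l : list P) : Prop :=
  match l with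
  | [] => True
  | q :: l' => Frel p q /\ Fchain_from q l'
  end.

Definition Fchain (w : word) : Prop := Fchain_from (fst w) (snd w).

(* a representative x_{p1}...x_{pk} of a with p1 F ... F pk
   (exists by the paper; chosen by Hilbert's epsilon) *)
Definition chainrep (a : FP) : word :=
  epsilon (inhabits (rep a)) (fun w => Fchain w /\ cls w = a).

Definition FP_D (a : FP) : FP := xgen (fst (chainrep a)).
Definition FP_R (a : FP) : FP := xgen (last (snd (chainrep a)) (fst (chainrep a))).
End FreeP.

(* Main.v *)
Require Import Defs.
From Stdlib Require Import List ClassicalEpsilon FunctionalExtensionality PropExtensionality ProofIrrelevance.
Import ListNotations.

Lemma th_idem (P : ProjAlg) (a x : P) : theta P a (theta P a x) = theta P a x.
Proof.
  transitivity (theta P a (delta P a (theta P a x))).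
  { rewrite pa_theta_delta. reflexivity. }
  rewrite pa_delta_theta. apply pa_theta_delta.
Qed.

Lemma de_idem (P : ProjAlg) (a x : P) : delta P a (delta P a x) = delta P a x.
Proof.
  transitivity (delta P a (theta P a (delta P a x))).
  { rewrite pa_delta_theta. reflexivity. }
  rewrite pa_theta_delta. apply pa_delta_theta.
Qed.

Lemma th_L2 (P : ProjAlg) (a b : P) : theta P (theta P a b) b = theta P a b.
Proof. pose proof (pa_theta3 P a b b) as H. rewrite !pa_theta_id in H. exact H. Qed.

Lemma de_L2 (P : ProjAlg) (a b : P) : delta P (delta P a b) b = delta P a b.
Proof. pose proof (pa_delta3 P a b b) as H. rewrite !pa_delta_id in H. exact H. Qed.

Lemma M1 (P : ProjAlg) (p q : P) : theta P (delta P p q) p = delta P p q.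
Proof.
  rewrite <- (pa_delta_theta P p q). rewrite pa_theta2. reflexivity.
Qed.

Lemma M2 (P : ProjAlg) (p q : P) : delta P (theta P p q) p = theta P p q.
Proof.
  rewrite <- (pa_theta_delta P p q). rewrite pa_delta2. reflexivity.
Qed.

Lemma TQ (P : ProjAlg) (p q : P) : theta P q (delta P p q) = theta P q p.
Proof.
  pose proof (pa_theta5 P q p p) as H. rewrite M1, pa_theta_id in H. exact H.
Qed.

Lemma DQ (P : ProjAlg) (p q : P) : delta P p (theta P q p) = delta P p q.
Proof.
  pose proof (pa_delta5 P p q q) as H. rewrite M2, pa_delta_id in H. exact H.
Qed.

Lemma NF (P : ProjAlg) (p q : P) : Frel P (delta P p q) (theta P q p).
Proof.
  split.
  - pose proof (DQ P p q) as E. rewrite <- E at 1 2. symmetry. apply de_L2.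
  - pose proof (TQ P p q) as E. rewrite <- E at 1 2. symmetry. apply th_L2.
Qed.

Lemma Key (P : ProjAlg) (a b u : P) : Frel P a b -> theta P a u = u -> delta P u b = u.
Proof.
  intros [Ha Hb] Hu.
  pose proof (pa_delta5 P u a b) as H. rewrite Hu, de_idem, <- Ha in H.
  rewrite H. pose proof (M2 P a u) as H2. rewrite Hu in H2. exact H2.
Qed.
Lemma fcong_app_l (P : ProjAlg) (m x y : list P) : fcong P x y -> fcong P (m ++ x) (m ++ y).
Proof.
  induction 1.
  - rewrite (app_assoc m l (u ++ r)), (app_assoc m l (v ++ r)). apply fcong_step. assumption.
  - apply fcong_refl.
  - apply fcong_sym; assumption.
  - eapply fcong_trans; eassumption.
Qed.

Lemma fcong_app_r (P : ProjAlg) (m x y : list P) : fcong P x y -> fcong P (x ++ m) (y ++ m).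
Proof.
  induction 1.
  - rewrite <- !app_assoc. apply fcong_step. assumption.
  - apply fcong_refl.
  - apply fcong_sym; assumption.
  - eapply fcong_trans; eassumption.
Qed.

Fixpoint push (P : ProjAlg) (u : P) (l : list P) : list P :=
  match l with
  | [] => []
  | b :: l' => theta P b u :: push P (theta P b u) l'
  end.

Lemma push_chain (P : ProjAlg) (l : list P) : forall a u,
  Fchain_from P a l -> theta P a u = u -> Fchain_from P u (push P u l).
Proof.
  induction l as [|b l IH]; intros a u Hc Hu; simpl; auto.
  destruct Hc as [Hab Hc]. split.
  - pose proof (NF P u b) as H. rewrite (Key P a b u Hab Hu) in H. exact H.
  - apply (IH b). exact Hc. apply th_idem.
Qed.

Lemma push_cong (P : ProjAlg) (l : list P) : forall u, fcong P (u :: l) (u :: push P u l).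
Proof.
  induction l as [|b l IH]; intros u; simpl.
  - apply fcong_refl.
  - eapply fcong_trans.
    + exact (fcong_step [] l (frel_theta P u b)).
    + exact (fcong_app_l _ [u] _ _ (IH (theta P b u))).
Qed.

Lemma chain_exists (P : ProjAlg) (l : list P) : forall p,
  exists w : word P, Fchain w /\ fcong P (p :: l) (wlist w).
Proof.
  induction l as [|q l IH]; intros p.
  - exists (p, []). split. exact I. apply fcong_refl.
  - destruct (IH q) as [[q1 l2] [Hc Hf]].
    exists (delta P p q1, theta P q1 p :: push P (theta P q1 p) l2). split.
    + split. apply NF. apply (push_chain P l2 q1). exact Hc. apply th_idem.
    + unfold wlist; simpl. unfold wlist in Hf; simpl in Hf.
      eapply fcong_trans. exact (fcong_app_l _ [p] _ _ Hf).
      eapply fcong_trans. exact (fcong_step [] l2 (frel_delta P p q1)).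
      eapply fcong_trans. exact (fcong_step [] l2 (frel_theta P (delta P p q1) q1)).
      rewrite TQ. exact (fcong_app_l _ [delta P p q1] _ _ (push_cong P l2 (theta P q1 p))).
Qed.

Lemma FP_ext (P : ProjAlg) (A B : list P -> Prop) (HA : exists w : word P, A = fcong P (wlist w))
  (HB : exists w : word P, B = fcong P (wlist w)) : A = B ->
  @exist (list P -> Prop) (fun A => exists w : word P, A = fcong P (wlist w)) A HA =
  @exist (list P -> Prop) (fun A => exists w : word P, A = fcong P (wlist w)) B HB.
Proof. intros ->. f_equal. apply proof_irrelevance. Qed.

Lemma cls_eq (P : ProjAlg) (w1 w2 : word P) : fcong P (wlist w1) (wlist w2) -> cls w1 = cls w2.
Proof.
  intros H. unfold cls. apply FP_ext. apply functional_extensionality. intros x.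
  apply propositional_extensionality. split; intros H'.
  - eapply fcong_trans. apply fcong_sym. exact H. exact H'.
  - eapply fcong_trans. exact H. exact H'.
Qed.

Lemma rep_spec (P : ProjAlg) (a : FP P) : proj1_sig a = fcong P (wlist (rep a)).
Proof.
  unfold rep. destruct (constructive_indefinite_description _ (proj2_sig a)) as [w Hw]. exact Hw.
Qed.

Lemma cls_rep (P : ProjAlg) (a : FP P) : cls (rep a) = a.
Proof.
  pose proof (rep_spec P a) as H. destruct a as [A HA]. simpl in H. unfold cls.
  apply FP_ext. symmetry. exact H.
Qed.

Lemma rep_cls (P : ProjAlg) (w : word P) : fcong P (wlist w) (wlist (rep (cls w))).
Proof.
  pose proof (rep_spec P (cls w)) as H. simpl in H. rewrite H. apply fcong_refl.
Qed.

Lemma cls_mul (P : ProjAlg) (w1 w2 : word P) :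
  FP_mul (cls w1) (cls w2) = cls (fst w1, snd w1 ++ wlist w2).
Proof.
  unfold FP_mul. apply cls_eq. unfold wlist; simpl.
  change (fcong P ((fst (rep (cls w1)) :: snd (rep (cls w1))) ++ wlist (rep (cls w2)))
                  ((fst w1 :: snd w1) ++ wlist w2)).
  eapply fcong_trans. apply fcong_app_l. apply fcong_sym. apply rep_cls.
  apply fcong_app_r. apply fcong_sym. apply rep_cls.
Qed.

Lemma chainrep_spec (P : ProjAlg) (a : FP P) : Fchain (chainrep a) /\ cls (chainrep a) = a.
Proof.
  unfold chainrep. apply epsilon_spec.
  destruct (chain_exists P (snd (rep a)) (fst (rep a))) as [w [Hc Hf]].
  exists w. split. exact Hc. rewrite <- (cls_rep P a). symmetry. apply cls_eq. exact Hf.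
Qed.
Lemma isproj (S : DRC) (e : S) : (exists a, e = Dop S a) ->
  Dop S e = e /\ Rop S e = e /\ mul S e e = e.
Proof.
  intros [a ->]. split; [|split].
  - transitivity (Dop S (Rop S (Dop S a))). { rewrite drc_RD. reflexivity. }
    rewrite drc_DR. apply drc_RD.
  - apply drc_RD.
  - pose proof (drc_RR S (Dop S a)) as H. rewrite drc_RD in H. exact H.
Qed.

Lemma e_Ref (S : DRC) (e f : S) : Rop S f = f -> mul S f f = f ->
  mul S e (Rop S (mul S e f)) = mul S e f.
Proof.
  intros Hf Hff. rewrite (drc_R_sand S e f). rewrite Hf.
  rewrite !drc_assoc. rewrite drc_RR. rewrite <- drc_assoc, Hff. reflexivity.
Qed.

Lemma Def_f (S : DRC) (e f : S) : Dop S e = e -> mul S e e = e ->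
  mul S (Dop S (mul S e f)) f = mul S e f.
Proof.
  intros He Hee.
  assert (H1 : mul S (Dop S (mul S e f)) e = Dop S (mul S e f)).
  { pose proof (drc_D_sand S e f) as HX. rewrite He in HX. rewrite HX.
    rewrite <- drc_assoc, Hee. reflexivity. }
  rewrite <- H1 at 1. rewrite <- drc_assoc. apply drc_DL.
Qed.

Definition pv (S : DRC) (x : projS S) : S := proj1_sig x.

Fixpoint ev (P : ProjAlg) (S : DRC) (phi : P -> projS S) (p : P) (l : list P) : S :=
  match l with
  | [] => pv S (phi p)
  | q :: l' => mul S (pv S (phi p)) (ev P S phi q l')
  end.

Lemma ev_app (P : ProjAlg) (S : DRC) (phi : P -> projS S) (l : list P) : forall p q m,
  ev P S phi p (l ++ q :: m) = mul S (ev P S phi p l) (ev P S phi q m).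
Proof.
  induction l as [|a l IH]; intros p q m; simpl. reflexivity.
  rewrite IH. apply drc_assoc.
Qed.

Definition evo (P : ProjAlg) (S : DRC) (phi : P -> projS S) (l : list P) : option S :=
  match l with [] => None | p :: l' => Some (ev P S phi p l') end.

Definition omul (S : DRC) (x y : option S) : option S :=
  match x, y with
  | None, _ => y
  | _, None => x
  | Some a, Some b => Some (mul S a b)
  end.

Lemma evo_app (P : ProjAlg) (S : DRC) (phi : P -> projS S) (u v : list P) :
  evo P S phi (u ++ v) = omul S (evo P S phi u) (evo P S phi v).
Proof.
  destruct u as [|p u]. reflexivity.
  destruct v as [|q m]. simpl. rewrite app_nil_r. reflexivity.
  simpl. rewrite ev_app. reflexivity.
Qed.

Lemma pv_proj (S : DRC) (x : projS S) :
  Dop S (pv S x) = pv S x /\ Rop S (pv S x) = pv S x /\ mul S (pv S x) (pv S x) = pv S x.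
Proof. apply isproj. exact (proj2_sig x). Qed.

Definition ismor (P : ProjAlg) (S : DRC) (phi : P -> projS S) :=
  is_pa_morphism (theta P) (delta P) (@projS_theta S) (@projS_delta S) phi.

Lemma mor_th (P : ProjAlg) (S : DRC) (phi : P -> projS S) : ismor P S phi ->
  forall p q, pv S (phi (theta P q p)) = Rop S (mul S (pv S (phi p)) (pv S (phi q))).
Proof. intros [Ht Hd] p q. unfold pv. rewrite Ht. reflexivity. Qed.

Lemma mor_de (P : ProjAlg) (S : DRC) (phi : P -> projS S) : ismor P S phi ->
  forall p q, pv S (phi (delta P p q)) = Dop S (mul S (pv S (phi p)) (pv S (phi q))).
Proof. intros [Ht Hd] p q. unfold pv. rewrite Hd. reflexivity. Qed.

Lemma frel_ev (P : ProjAlg) (S : DRC) (phi : P -> projS S) : ismor P S phi ->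
  forall u v, frel P u v -> evo P S phi u = evo P S phi v.
Proof.
  intros Hm u v H. destruct H as [p|p q|p q]; simpl; f_equal.
  - destruct (pv_proj S (phi p)) as [_ [_ H]]. exact H.
  - rewrite (mor_th P S phi Hm). symmetry. apply e_Ref; apply pv_proj.
  - rewrite (mor_de P S phi Hm). symmetry. apply Def_f; apply pv_proj.
Qed.

Lemma fcong_ev (P : ProjAlg) (S : DRC) (phi : P -> projS S) : ismor P S phi ->
  forall u v, fcong P u v -> evo P S phi u = evo P S phi v.
Proof.
  intros Hm u v H. induction H.
  - rewrite !evo_app. rewrite (frel_ev P S phi Hm u v H). reflexivity.
  - reflexivity.
  - symmetry; assumption.
  - congruence.
Qed.

Lemma ev_D (P : ProjAlg) (S : DRC) (phi : P -> projS S) : ismor P S phi ->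
  forall l p, Fchain_from P p l -> Dop S (ev P S phi p l) = pv S (phi p).
Proof.
  intros Hm l. induction l as [|q l IH]; intros p Hc; simpl.
  - apply pv_proj.
  - destruct Hc as [[Hp Hq] Hc]. rewrite drc_D_mul, (IH q Hc).
    rewrite <- (mor_de P S phi Hm). rewrite <- Hp. reflexivity.
Qed.

Lemma last_indep (A : Type) (q p a : A) (l : list A) : last (a :: l) p = last (a :: l) q.
Proof. revert a. induction l as [|b l IH]; intros a. reflexivity. exact (IH b). Qed.

Lemma ev_R (P : ProjAlg) (S : DRC) (phi : P -> projS S) : ismor P S phi ->
  forall l p, Fchain_from P p l -> Rop S (ev P S phi p l) = pv S (phi (last l p)).
Proof.
  intros Hm l. induction l as [|q l IH]; intros p Hc; simpl.
  - apply pv_proj.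
  - assert (HY : ev P S phi q l = mul S (pv S (phi q)) (ev P S phi q l)).
    { destruct Hc as [_ Hc]. rewrite <- (ev_D P S phi Hm l q Hc) at 1. symmetry. apply drc_DL. }
    destruct Hc as [[Hp Hq] Hc].
    rewrite HY, drc_assoc, drc_R_mul, <- (mor_th P S phi Hm), <- Hq, <- HY.
    rewrite (IH q Hc).
    destruct l as [|b l]. reflexivity. simpl. f_equal. f_equal. apply last_indep.
Qed.
Definition PhiF (P : ProjAlg) (S : DRC) (phi : P -> projS S) (a : FP P) : S :=
  ev P S phi (fst (rep a)) (snd (rep a)).

Lemma Phi_cls (P : ProjAlg) (S : DRC) (phi : P -> projS S) : ismor P S phi ->
  forall w, PhiF P S phi (cls w) = ev P S phi (fst w) (snd w).
Proof.
  intros Hm w. pose proof (fcong_ev P S phi Hm _ _ (rep_cls P w)) as H.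
  unfold wlist in H; simpl in H. unfold PhiF. congruence.
Qed.

Lemma Psi_cls (P : ProjAlg) (S : DRC) (phi : P -> projS S) (Psi : FP P -> S) :
  is_drc_morphism (@FP_mul P) (@FP_D P) (@FP_R P) (mul S) (Dop S) (Rop S) Psi ->
  (forall p : P, Psi (@xgen P p) = proj1_sig (phi p)) ->
  forall l p, Psi (cls (p, l)) = ev P S phi p l.
Proof.
  intros [Hmul _] Hx l. induction l as [|q l IH]; intros p.
  - exact (Hx p).
  - pose proof (cls_mul P (p, []) (q, l)) as E. simpl in E. unfold wlist in E. simpl in E.
    rewrite <- E. rewrite Hmul. simpl.
    change (cls (p, [])) with (xgen P p). rewrite Hx, IH. reflexivity.
Qed.

Theorem proposition8p12 (P : ProjAlg) (S : DRC) (phi : P -> projS S) :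
  is_pa_morphism (theta P) (delta P) (@projS_theta S) (@projS_delta S) phi ->
  exists Phi : FP P -> S,
    is_drc_morphism (@FP_mul P) (@FP_D P) (@FP_R P) (mul S) (Dop S) (Rop S) Phi /\
    (forall p : P, Phi (@xgen P p) = proj1_sig (phi p)) /\
    (forall Psi : FP P -> S,
       is_drc_morphism (@FP_mul P) (@FP_D P) (@FP_R P) (mul S) (Dop S) (Rop S) Psi ->
       (forall p : P, Psi (@xgen P p) = proj1_sig (phi p)) ->
       forall a, Psi a = Phi a).
Proof.
  intros Hm0. assert (Hm : ismor P S phi) by exact Hm0.
  assert (Hc : forall a c, cls c = a -> PhiF P S phi a = ev P S phi (fst c) (snd c)).
  { intros a c <-. apply Phi_cls. exact Hm. }
  exists (PhiF P S phi). split; [|split].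
  - split; [|split].
    + intros a b. unfold FP_mul. rewrite Phi_cls by exact Hm. simpl.
      unfold wlist. rewrite ev_app. reflexivity.
    + intros a. destruct (chainrep_spec P a) as [Hch Hcl].
      unfold FP_D. unfold xgen. rewrite Phi_cls by exact Hm. simpl.
      rewrite (Hc a _ Hcl). symmetry. apply ev_D; assumption.
    + intros a. destruct (chainrep_spec P a) as [Hch Hcl].
      unfold FP_R. unfold xgen. rewrite Phi_cls by exact Hm. simpl.
      rewrite (Hc a _ Hcl). symmetry. apply ev_R; assumption.
  - intros p. unfold xgen. rewrite Phi_cls by exact Hm. reflexivity.
  - intros Psi HPsi Hx a. rewrite <- (cls_rep P a).
    destruct (rep a) as [p l]. rewrite (Psi_cls P S phi Psi HPsi Hx).
    rewrite Phi_cls by exact Hm. reflexivity.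
Qed.
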